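(* Let $\beta>0$, $k\in\mathbb N$ with $\beta\in(2k,2k+2]$, $f\in\mathcal H(\beta,\mathcal P)$ with $\mathcal P=\{\gamma,l^+,L,\varepsilon,C,\alpha,\xi,M\}$, and $p\in(0,1)$. Then for all $x\in\mathbb R$: (1) for every positive integer $i$ and every $\sigma<1-p^{1/i}$, $K_\sigma^if(x)\le M\big(\frac{2}{\sqrt3}\big)^i\psi(px)$; (2) for every $\sigma<1-p^{1/k}$ (read as $\sigma<1$ when $k=0$), $\max\big(f_k(x),g_k(x),\tfrac12h_k(x)\big)\le 2M\big(\frac4{\sqrt3}\big)^k\psi(px)$.
   Context: $\psi(x)=\pi^{-1/2}e^{-x^2}$, $\psi_\sigma(x)=\sigma^{-1}\psi(x/\sigma)$, $K_\sigma g=g*\psi_\sigma$, $K_\sigma^i$ its $i$-fold iterate, $\Delta_\sigma g=K_\sigma g-g$. Given $f$ and $\sigma$: $f_0=f$, $f_{j+1}=f-\Delta_\sigma f_j$; $J_{\sigma,k}=\{x:f_k(x)>\frac12f(x)\}$; $g_k=f_k\mathbf 1_{J_{\sigma,k}}+\frac12f\mathbf 1_{J_{\sigma,k}^c}$; $h_k=g_k/\int g_k$. For $\beta>0$, $r$ is the largest integer strictly less than $\beta$; $\mathcal H(\beta,\mathcal P)$ ($L$ polynomial, others positive constants) is the set of probability densities $f$ with $\ln f$ $r$ times differentiable, $|(\ln f)^{(r)}(x)-(\ln f)^{(r)}(y)|\le r!L(x)|y-x|^{\beta-r}$ for $|x-y|\le\gamma$, $|(\ln f)^{(j)}(0)|\le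 l^+$; $\int|(\ln f)^{(j)}|^{(2\beta+\varepsilon)/j}f\le C$, $\int|L|^{2+\varepsilon/\beta}f\le C$; $f(x)\le M\psi(x)$; $f>0$ nondecreasing on $(-\infty,-\alpha)$, nonincreasing on $(\alpha,\infty)$, $f\ge\xi$ on $[-\alpha,\alpha]$. *)

(* Defs.v *)
From HB Require Import structures.
From mathcomp Require Import all_boot all_order all_algebra.
From mathcomp Require Import all_classical all_reals all_analysis.
Set Implicit Arguments. Unset Strict Implicit. Unset Printing Implicit Defensive.
Import Order.TTheory GRing.Theory Num.Theory.
Import numFieldNormedType.Exports.
Local Open Scope classical_set_scope.
Local Open Scope ring_scope.

Section Defs.
Variable R : realType.

Definition leb := (@lebesgue_measure R).

Definition psi (x : R) : R := (Num.sqrt pi)^-1 * expR (- x ^+ 2).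
Definition psi_s (s : R) (x : R) : R := s^-1 * psi (x / s).
Definition Kop (s : R) (g : R -> R) : R -> R :=
  fun x => Rintegral leb setT (fun y => g y * psi_s s (x - y)).
Definition Kiter (s : R) (i : nat) (g : R -> R) : R -> R := iter i (Kop s) g.
Definition Delta (s : R) (g : R -> R) : R -> R := fun x => Kop s g x - g x.
Fixpoint fseq (s : R) (f : R -> R) (j : nat) : R -> R :=
  match j with
  | 0%N => f
  | j'.+1 => fun x => f x - Delta s (fseq s f j') x
  end.
Definition Jset (s : R) (f : R -> R) (k : nat) : set R :=
  [set x | fseq s f k x > f x / 2].
Definition gseq (s : R) (f : R -> R) (k : nat) : R -> R :=
  fun x => fseq s f k x * (\1_(Jset s f k) x) + f x / 2 * (\1_(~` Jset s f k) x).
Definition hseq (s : R) (f : R -> R) (k : nat) : R -> R :=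
  fun x => gseq s f k x / Rintegral leb setT (gseq s f k).

Definition inH (beta gamma lplus : R) (L : {poly R}) (eps C alpha xi M : R)
  (f : R -> R) : Prop :=
  let l := fun x => ln (f x) in
  forall r : nat, (r%:R < beta <= r.+1%:R) ->
  (
      measurable_fun setT f /\ (forall x, 0 <= f x) /\
      (\int[leb]_x (f x)%:E = 1)%E /\
      (forall j x, (j < r)%N -> derivable (derive1n j l) x 1) /\
      (forall x y, `|x - y| <= gamma ->
         `|derive1n r l x - derive1n r l y|
           <= (r`!)%:R * L.[x] * (`|y - x| `^ (beta - r%:R))) /\
      (forall j, (1 <= j <= r)%N -> `|derive1n j l 0| <= lplus) /\
      (forall j, (1 <= j <= r)%N ->
         (\int[leb]_x ((`|derive1n j l x| `^ ((2 * beta + eps) / j%:R)) * f x)%:E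
            <= C%:E)%E) /\
      (\int[leb]_x ((`|L.[x]| `^ (2 + eps / beta)) * f x)%:E <= C%:E)%E /\
      (
          (forall x, f x <= M * psi x) /\
          (forall x, x < - alpha -> 0 < f x) /\
          (forall x, alpha < x -> 0 < f x) /\
          (forall x y, x <= y -> y < - alpha -> f x <= f y) /\
          (forall x y, alpha < x -> x <= y -> f y <= f x) /\
          (forall x, - alpha <= x <= alpha -> xi <= f x))).

End Defs.

(* Main.v *)
Require Import Defs.
From HB Require Import structures.
From mathcomp Require Import all_boot all_order all_algebra.
From mathcomp Require Import all_classical all_reals all_analysis.
From mathcomp Require Import measurable_realfun.
From mathcomp Require Import ring lra.
Import Order.TTheory GRing.Theory Num.Theory.
Import numFieldNormedType.Exports.
Local Open Scope classical_set_scope.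
Local Open Scope ring_scope.

Section S.
Variable R : realType.

Lemma sqrtpi_gt0 : 0 < Num.sqrt (pi : R).
Proof. by rewrite sqrtr_gt0 pi_gt0. Qed.

Lemma conv_pointwise (t s x y : R) : 0 < t -> 0 < s ->
  let r := Num.sqrt (t^+2 + s^+2) in
  let v := t * s / (r * Num.sqrt 2) in
  psi_s t y * psi_s s (x - y) =
  psi_s r x * normal_pdf (x * t^+2 / (t^+2 + s^+2)) v y.
Proof.
move=> t0 s0 r v.
have ts0 : 0 < t^+2 + s^+2 by rewrite addr_gt0 // exprn_gt0.
have r0 : 0 < r by rewrite sqrtr_gt0.
have r2 : r^+2 = t^+2 + s^+2 by rewrite sqr_sqrtr // ltW.
have s2 : Num.sqrt 2 ^+ 2 = 2 :> R by rewrite sqr_sqrtr.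
have sq2 : 0 < Num.sqrt 2 :> R by rewrite sqrtr_gt0.
have v0 : 0 < v by rewrite divr_gt0 ?mulr_gt0.
have cpi := @sqrtpi_gt0.
have v2 : v^+2 *+ 2 = t^+2 * s^+2 / (t^+2 + s^+2).
  rewrite /v expr_div_n !exprMn s2 r2 -mulr_natr; field.
  by rewrite gt_eqF.
rewrite normal_pdfE ?gt_eqF // /normal_peak /normal_fun.
have -> : Num.sqrt (v ^+ 2 * pi *+ 2) = t * s * Num.sqrt pi / r.
  rewrite (_ : v ^+ 2 * pi *+ 2 = (v^+2 *+2) * pi); last by rewrite mulrnAl.
  rewrite v2.
  rewrite (_ : _ * _ = (t * s * Num.sqrt pi / r) ^+ 2); last first.
    rewrite !expr_div_n !exprMn r2 sqr_sqrtr ?pi_ge0 //.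
    by field; rewrite gt_eqF.
  by rewrite sqrtr_sqr ger0_norm // ltW // divr_gt0 // !mulr_gt0.
rewrite v2 /psi_s /psi.
have key : forall a1 a2 a3 a4 b1 b2 b3 u1 u2 u3 u4 : R,
  a1*a2*a3*a4 = b1*b2*b3 -> u1+u2 = u3+u4 ->
  a1 * (a2 * expR u1) * (a3 * (a4 * expR u2)) = b1 * (b2 * expR u3) * (b3 * expR u4).
  move=> a1 a2 a3 a4 b1 b2 b3 u1 u2 u3 u4 h1 h2.
  transitivity ((a1*a2*a3*a4) * expR (u1+u2)); first by rewrite expRD; ring.
  by rewrite h1 h2 expRD; ring.
apply: key.
  field; rewrite !gt_eqF //.
rewrite !expr_div_n r2; field.
by rewrite !gt_eqF.
Qed.


Lemma conv_gauss (t s x : R) : 0 < t -> 0 < s ->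
  (\int[@leb R]_y (psi_s t y * psi_s s (x - y))%:E =
   (psi_s (Num.sqrt (t^+2 + s^+2)) x)%:E)%E.
Proof.
move=> t0 s0.
under eq_integral do rewrite conv_pointwise // EFinM.
by rewrite integralZl //= ?integral_normal_pdf ?mule1 //; exact: integrable_normal_pdf.
Qed.

Lemma measurable_psi_s (s : R) : measurable_fun setT (psi_s s).
Proof.
rewrite (_ : psi_s s = fun x => (s^-1 * (Num.sqrt pi)^-1) *
   expR ((- (s^-1)^+2) * (x * x))); last first.
  apply/funext => x; rewrite /psi_s /psi mulrA; congr (_ * expR _).
  by rewrite mulNr exprMn [x ^+ 2]expr2 mulrC.
have hg : measurable_fun setT (fun x : R => - (s^-1)^+2 * (x*x)).
  by apply: measurable_funM => //; exact: measurable_funM.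
apply: measurable_funM => //.
exact: (measurableT_comp (@measurable_expR R) hg).
Qed.

Lemma measurable_prod_integrand (s : R) (g : R -> R) :
  measurable_fun setT g ->
  measurable_fun setT (fun z : measurableTypeR R * measurableTypeR R =>
    (g z.2 * psi_s s (z.1 - z.2))%:E).
Proof.
move=> mg; apply/measurable_EFinP; apply: measurable_funM.
  exact: measurableT_comp mg measurable_snd.
apply: measurableT_comp (measurable_psi_s s) _.
exact: measurable_funB measurable_fst measurable_snd.
Qed.

Lemma measurable_Kop (s : R) (g : R -> R) :
  measurable_fun setT g -> (forall y, 0 <= g y) -> 0 < s ->
  measurable_fun setT (Kop s g).
Proof.
move=> mg g0 s0.
have psi_ge0 : forall t y : R, 0 < t -> 0 <= psi_s t y.
  move=> t y t0; rewrite /psi_s /psi; apply: mulr_ge0; first by rewrite invr_ge0 ltW.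
  by apply: mulr_ge0; [rewrite invr_ge0 sqrtr_ge0|exact: expR_ge0].
have F0 : forall z : R * R, (0 <= (g z.2 * psi_s s (z.1 - z.2))%:E)%E.
  by move=> z; rewrite lee_fin mulr_ge0 ?g0 ?psi_ge0.
have H := @measurable_fun_fubini_tonelli_F _ _ (measurableTypeR R) (measurableTypeR R) R (@leb R) _
  (measurable_prod_integrand s g mg) F0.
rewrite (_ : Kop s g = fine \o fubini_F (@leb R)
   (fun z : R * R => (g z.2 * psi_s s (z.1 - z.2))%:E)); last first.
  by apply/funext => x.
exact: measurableT_comp (fine_measurable measurableT) H.
Qed.


Lemma psi_s_ge0 (t y : R) : 0 < t -> 0 <= psi_s t y.
Proof.
move=> t0; rewrite /psi_s /psi; apply: mulr_ge0; first by rewrite invr_ge0 ltW.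
by apply: mulr_ge0; [rewrite invr_ge0 sqrtr_ge0|exact: expR_ge0].
Qed.

Lemma integrable_conv (t s x : R) : 0 < t -> 0 < s ->
  (@leb R).-integrable setT (fun y => (psi_s t y * psi_s s (x - y))%:E).
Proof.
move=> t0 s0.
rewrite (_ : (fun y => _) = fun y =>
  ((psi_s (Num.sqrt (t^+2 + s^+2)) x)%:E *
   (normal_pdf (x * t^+2 / (t^+2 + s^+2))
     (t * s / (Num.sqrt (t^+2 + s^+2) * Num.sqrt 2)) y)%:E)%E); last first.
  by apply/funext => y; rewrite conv_pointwise // EFinM.
apply: integrableZl => //; exact: integrable_normal_pdf.
Qed.

Lemma measurable_shift (s x : R) (g : R -> R) : measurable_fun setT g ->
  measurable_fun setT (fun y => (g y * psi_s s (x - y))%:E).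
Proof.
move=> mg; apply/measurable_EFinP; apply: measurable_funM => //.
have h : measurable_fun setT (fun y : R => x - y).
  exact: measurable_funB.
exact: (measurableT_comp (measurable_psi_s s) h).
Qed.

Lemma Kop_bound (s t B : R) (g : R -> R) : 0 < s -> 0 < t -> 0 <= B ->
  measurable_fun setT g -> (forall y, 0 <= g y) ->
  (forall y, g y <= B * psi_s t y) ->
  (forall x, (@leb R).-integrable setT (fun y => (g y * psi_s s (x - y))%:E)) /\
  (forall x, 0 <= Kop s g x <= B * psi_s (Num.sqrt (t^+2 + s^+2)) x).
Proof.
move=> s0 t0 B0 mg g0 gB.
have idom : forall x, (@leb R).-integrable setT
    (fun y => (B * (psi_s t y * psi_s s (x - y)))%:E).
  move=> x; under eq_fun do rewrite EFinM.
  by apply: integrableZl => //; exact: integrable_conv.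
have ig : forall x, (@leb R).-integrable setT (fun y => (g y * psi_s s (x - y))%:E).
  move=> x; apply: le_integrable (idom x) => //.
    exact: measurable_shift.
  move=> y _; rewrite !gee0_abs ?lee_fin.
  - by rewrite mulrA; apply: ler_wpM2r; [exact: psi_s_ge0|exact: gB].
  - by apply: mulr_ge0 => //; apply: mulr_ge0; apply: psi_s_ge0.
  - by apply: mulr_ge0 => //; apply: psi_s_ge0.
split => // x; apply/andP; split.
  by rewrite /Kop /Rintegral fine_ge0 // integral_ge0 // => y _; rewrite lee_fin; apply: mulr_ge0 => //; apply: psi_s_ge0.
have I2 : (\int[@leb R]_y (B * (psi_s t y * psi_s s (x - y)))%:E =
    (B * psi_s (Num.sqrt (t^+2 + s^+2)) x)%:E)%E.
  under eq_integral do rewrite EFinM.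
  by rewrite integralZl //= ?conv_gauss // ?EFinM //; exact: integrable_conv.
rewrite /Kop /Rintegral -[X in _ <= X]/(fine ((B * psi_s (Num.sqrt (t^+2 + s^+2)) x)%:E)).
rewrite -I2; apply: fine_le.
- exact: integrable_fin_num.
- exact: integrable_fin_num.
apply: ge0_le_integral => //.
- by move=> y _; rewrite lee_fin; apply: mulr_ge0 => //; apply: psi_s_ge0.
- exact: measurable_shift.
- by move: (idom x) => /integrableP[].
by move=> y _; rewrite lee_fin mulrA; apply: ler_wpM2r; [exact: psi_s_ge0|exact: gB].
Qed.


Lemma Kiter_props (s M : R) (f : R -> R) : 0 < s -> 0 <= M ->
  measurable_fun setT f -> (forall y, 0 <= f y) -> (forall y, f y <= M * psi y) ->
  forall i, [/\ measurable_fun setT (Kiter s i f),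
    (forall y, 0 <= Kiter s i f y) &
    (forall y, Kiter s i f y <= M * psi_s (Num.sqrt (1 + i%:R * s^+2)) y)].
Proof.
move=> s0 M0 mf f0 fM; elim=> [|i [mi ip ib]].
  split => // y; rewrite /Kiter /= mul0r addr0 sqrtr1 /psi_s invr1 mul1r mulr1.
  exact: fM.
have t0 : 0 < Num.sqrt (1 + i%:R * s^+2).
  by rewrite sqrtr_gt0 ltr_wpDr // mulr_ge0 // sqr_ge0.
have [hi hb] := @Kop_bound s _ M (Kiter s i f) s0 t0 M0 mi ip ib.
have -> : Kiter s i.+1 f = Kop s (Kiter s i f) by [].
split.
- exact: measurable_Kop.
- by move=> y; have /andP[] := hb y.
- move=> y; have /andP[_] := hb y.
  rewrite sqr_sqrtr; last by rewrite addr_ge0 // mulr_ge0 // sqr_ge0.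
  by rewrite -addrA -{2}(mul1r (s^+2)) -mulrDl -natr1 [1 + _]addrC.
Qed.

Lemma psi_s_le (t p y : R) : 1 <= t -> 0 <= p -> p^+2 * t^+2 <= 1 ->
  psi_s t y <= psi (p * y).
Proof.
move=> t1 p0 pt.
have t0 : 0 < t by apply: lt_le_trans t1.
rewrite /psi_s /psi mulrCA; apply: ler_wpM2l; first by rewrite invr_ge0 sqrtr_ge0.
apply: le_trans (_ : expR (- (y / t) ^+ 2) <= _).
  by apply: ler_piMl; rewrite ?expR_ge0 // invr_le1 // ?unitfE ?gt_eqF.
rewrite ler_expR lerN2 expr_div_n exprMn ler_pdivlMr ?exprn_gt0 //.
rewrite mulrAC -[X in _ <= X]mul1r; apply: ler_wpM2r; first exact: sqr_ge0.
by [].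
Qed.


Lemma bernoulli (d : R) (n : nat) : 0 <= d -> 1 + n%:R * d <= (1 + d) ^+ n.
Proof.
move=> d0; elim: n => [|n IH]; first by rewrite mul0r addr0 expr0.
rewrite exprS -natr1 mulrDl mul1r.
have h : 0 <= (1 + d) ^+ n by rewrite exprn_ge0 // addr_ge0.
have h2 : 0 <= n%:R * d by rewrite mulr_ge0.
nra.
Qed.

Lemma tau_bound (p s : R) (i : nat) : 0 < p -> p < 1 -> (0 < i)%N -> 0 < s ->
  s < 1 - p `^ (i%:R^-1) -> p^+2 * (1 + i%:R * s^+2) <= 1.
Proof.
move=> p0 p1 i0 s0 sq.
set q := p `^ (i%:R^-1) in sq.
have q0 : 0 < q by exact: powR_gt0.
have qi : q ^+ i = p.
  rewrite -powR_mulrn ?ltW // -powRrM mulVf ?powRr1 ?ltW //.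
  by rewrite pnatr_eq0 -lt0n.
set d := 1 - q in sq.
have d0 : 0 < d by apply: lt_trans sq.
have d1 : d < 1 by rewrite /d ltrBlDr ltrDl.
have qd : q = 1 - d by rewrite /d opprB addrC subrK.
have p2 : p ^+ 2 = (1 - d) ^+ (2 * i) by rewrite -qi -exprM mulnC qd.
rewrite p2.
have e0 : 0 <= (1 - d) ^+ (2 * i) by rewrite exprn_ge0 // subr_ge0 ltW.
apply: le_trans (_ : (1 - d) ^+ (2 * i) * (1 + d) ^+ (2 * i) <= 1).
  apply: ler_wpM2l => //.
  apply: (le_trans _ (bernoulli d (2 * i) (ltW d0))).
  rewrite natrM lerD2l.
  have hs : s ^+ 2 <= d ^+ 2 by nra.
  have hd : d ^+ 2 <= 2 * d by nra.
  have ii : 0 <= i%:R :> R by [].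
  nra.
rewrite -exprMn; apply: exprn_ile1.
  nra.
have : 0 <= d ^+ 2 by rewrite sqr_ge0.
nra.
Qed.


Lemma Kop_sum (s x : R) (n : nat) (c : nat -> R) (h : nat -> R -> R) :
  (forall m, (m < n)%N ->
     (@leb R).-integrable setT (fun y => (h m y * psi_s s (x - y))%:E)) ->
  (@leb R).-integrable setT
     (fun y => ((\sum_(m < n) c m * h m y) * psi_s s (x - y))%:E) /\
  Kop s (fun y => \sum_(m < n) c m * h m y) x = \sum_(m < n) c m * Kop s (h m) x.
Proof.
elim: n => [|n IH] hint.
  split.
    rewrite (_ : (fun y => _) = cst 0%E); first exact: integrable0.
    by apply/funext => y; rewrite big_ord0 mul0r.
  rewrite big_ord0 /Kop /Rintegral.
  under eq_integral do rewrite big_ord0 mul0r.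
  by rewrite integral0.
have [IHi IHe] := IH (fun m hm => hint m (ltnW hm)).
have hn := hint n (ltnSn n).
have E : (fun y => (\sum_(m < n.+1) c m * h m y) * psi_s s (x - y)) =
    (fun y => (\sum_(m < n) c m * h m y) * psi_s s (x - y) +
              c n * (h n y * psi_s s (x - y))).
  by apply/funext => y; rewrite big_ord_recr /= mulrDl mulrA.
have hn' : (@leb R).-integrable setT
    (EFin \o (fun y => c n * (h n y * psi_s s (x - y)))).
  rewrite (_ : _ \o _ = fun y => ((c n)%:E * (h n y * psi_s s (x - y))%:E)%E).
    exact: integrableZl.
  by apply/funext => y; rewrite /= EFinM.
pose A := (fun y => (\sum_(m < n) c m * h m y) * psi_s s (x - y)).
pose B := (fun y => c n * (h n y * psi_s s (x - y))).
split.
  rewrite (_ : (fun y => _) = ((EFin \o A) \+ (EFin \o B))%E); last first.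
    by apply/funext => y; rewrite /A /B /= big_ord_recr /= mulrDl mulrA EFinD.
  exact: integrableD.
rewrite big_ord_recr /= -IHe /Kop -/(Rintegral _ _ _).
rewrite (_ : (fun y => _) = (fun y => (\sum_(m < n.+1) c m * h m y) * psi_s s (x - y))) //.
rewrite E RintegralD //= RintegralZl //.
Qed.


Lemma fseq_repr (s M : R) (f : R -> R) : 0 < s -> 0 <= M ->
  measurable_fun setT f -> (forall y, 0 <= f y) -> (forall y, f y <= M * psi y) ->
  forall j, exists c : nat -> R, [/\ forall m, (j < m)%N -> c m = 0,
   forall x, fseq s f j x = \sum_(m < j.+1) c m * Kiter s m f x &
   \sum_(m < j.+1) `|c m| <= 2 ^+ j.+1 - 1].
Proof.
move=> s0 M0 mf f0 fM.
have KP := @Kiter_props s M f s0 M0 mf f0 fM.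
have hint : forall x m, (@leb R).-integrable setT
    (fun y => (Kiter s m f y * psi_s s (x - y))%:E).
  move=> x m; have [mi ip ib] := KP m.
  have t0 : 0 < Num.sqrt (1 + m%:R * s^+2).
    by rewrite sqrtr_gt0 ltr_wpDr // mulr_ge0 // sqr_ge0.
  by have [hi _] := @Kop_bound s _ M (Kiter s m f) s0 t0 M0 mi ip ib.
elim=> [|j [c [cz cE cS]]].
  exists (fun m => (m == 0)%:R); split.
  - by case.
  - by move=> x; rewrite big_ord1 /= mul1r.
  - by rewrite big_ord1 /= normr1 expr1; lra.
pose sh := fun m : nat => if m is m'.+1 then c m' else 0.
exists (fun m => (m == 0)%:R + c m - sh m); split.
- move=> [|m] // jm; rewrite /sh /= cz ?cz //; first by rewrite addr0 subr0.
  exact: ltnW.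
- move=> x.
  rewrite /= /Delta.
  have -> : Kop s (fseq s f j) x = \sum_(m < j.+1) c m * Kiter s m.+1 f x.
    rewrite (_ : fseq s f j = fun y => \sum_(m < j.+1) c m * Kiter s m f y); last first.
      by apply/funext => y; rewrite cE.
    by have [_ ->] := @Kop_sum s x j.+1 c (fun m => Kiter s m f) (fun m _ => hint x m).
  under eq_bigr do rewrite mulrBl mulrDl.
  rewrite sumrB big_split /=.
  have e1 : \sum_(i < j.+2) (i == 0 :> nat)%:R * Kiter s i f x = f x.
    rewrite big_ord_recl big1 ?addr0 ?mul1r // => i _.
    by rewrite lift0 /= mul0r.
  have e2 : \sum_(i < j.+2) c i * Kiter s i f x = fseq s f j x.
    by rewrite big_ord_recr /= cz // mul0r addr0 cE.
  have e3 : \sum_(i < j.+2) sh i * Kiter s i f x =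
      \sum_(m < j.+1) c m * Kop s (Kiter s m f) x.
    rewrite big_ord_recl /= mul0r add0r.
    by apply: eq_bigr => i _; rewrite add0n.
  rewrite e1 e2 e3.
  lra.
- apply: le_trans (_ : \sum_(m < j.+2) (`|(m == 0)%:R| + `|c m| + `|sh m|) <= _).
    apply: ler_sum => m _.
    apply: le_trans (ler_normB _ _) _.
    by rewrite lerD2r ler_normD.
  rewrite big_split big_split /=.
  have e1 : \sum_(i < j.+2) `|(i == 0 :> nat)%:R : R| = 1.
    rewrite big_ord_recl big1 ?addr0 ?normr1 // => i _.
    by rewrite lift0 /= normr0.
  have e2 : \sum_(i < j.+2) `|c i| = \sum_(i < j.+1) `|c i|.
    by rewrite big_ord_recr /= cz // normr0 addr0.
  have e3 : \sum_(i < j.+2) `|sh i| = \sum_(i < j.+1) `|c i|.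
    rewrite big_ord_recl /= normr0 add0r.
    by apply: eq_bigr => i _; rewrite add0n.
  rewrite e1 e2 e3; move: cS; rewrite !exprS; lra.
Qed.


Lemma int_ge_half (f g : R -> R) : measurable_fun setT f -> (forall x, 0 <= f x) ->
  (\int[@leb R]_x (f x)%:E = 1)%E -> (forall x, f x / 2 <= g x) ->
  ((2^-1)%:E <= \int[@leb R]_x (g x)%:E)%E.
Proof.
move=> mf f0 f1 fg.
have g0 : forall x, 0 <= g x.
  by move=> x; apply: le_trans (fg x); rewrite divr_ge0.
have E : (\int[@leb R]_x (f x / 2)%:E = (2^-1)%:E)%E.
  under eq_integral do rewrite EFinM muleC.
  rewrite ge0_integralZl //= ?f1 ?mule1 //.
  - exact/measurable_EFinP.
  - by move=> x _; rewrite lee_fin.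
have hg : forall x, (0 <= (g x)%:E)%E by move=> x; rewrite lee_fin.
have hf : forall x, (0 <= (f x / 2)%:E)%E by move=> x; rewrite lee_fin divr_ge0.
rewrite -E (@ge0_integralTE _ _ _ (@leb R) _ hf) (@ge0_integralTE _ _ _ (@leb R) _ hg).
apply: le_ereal_sup => _ [h hle <-]; exists h => //= x.
by apply: le_trans (hle x) _; rewrite lee_fin.
Qed.


Lemma sqrt3_le2 : Num.sqrt 3 <= 2 :> R.
Proof.
have h : Num.sqrt 3 ^+ 2 = 3 :> R by rewrite sqr_sqrtr.
have h0 : 0 <= Num.sqrt 3 :> R by rewrite sqrtr_ge0.
nra.
Qed.

Lemma sqrt3_gt0 : 0 < Num.sqrt 3 :> R.
Proof. by rewrite sqrtr_gt0. Qed.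

Lemma psi_ge0 (y : R) : 0 <= psi y.
Proof. by rewrite /psi; apply: mulr_ge0; [rewrite invr_ge0 sqrtr_ge0|exact: expR_ge0]. Qed.

Lemma tau_ge1 (i : nat) (s : R) : 1 <= Num.sqrt (1 + i%:R * s^+2).
Proof.
rewrite -[X in X <= _]sqrtr1 ler_sqrt; last by rewrite addr_ge0 // mulr_ge0 // sqr_ge0.
by rewrite lerDl mulr_ge0 // sqr_ge0.
Qed.

End S.

Theorem lemma14 (R : realType) (beta : R) (k : nat)
  (gamma lplus : R) (L : {poly R}) (eps C alpha xi M : R) (f : R -> R) (p : R) :
  0 < beta -> (2 * k)%:R < beta <= (2 * k + 2)%:R ->
  0 < gamma -> 0 < lplus -> 0 < eps -> 0 < C -> 0 < alpha -> 0 < xi -> 0 < M ->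
  inH beta gamma lplus L eps C alpha xi M f ->
  0 < p < 1 ->
  forall x : R,
    (forall (i : nat) (s : R), (0 < i)%N -> 0 < s -> s < 1 - p `^ (i%:R^-1) ->
       Kiter s i f x <= M * (2 / Num.sqrt 3) ^+ i * psi (p * x)) /\
    (forall s : R, 0 < s ->
       (if k == 0%N then s < 1 else s < 1 - p `^ (k%:R^-1)) ->
       Num.max (fseq s f k x) (Num.max (gseq s f k x) (hseq s f k x / 2))
         <= 2 * M * (4 / Num.sqrt 3) ^+ k * psi (p * x)).
Proof.
move=> b0 /andP[bl bu] _ _ _ _ _ _ M0 hH /andP[p0 p1] x.
have [r hr] : exists r : nat, (r%:R < beta <= r.+1%:R).
  have [h|h] := leP beta (2 * k + 1)%:R.
    by exists (2 * k)%N; rewrite bl /= -addn1.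
  by exists (2 * k + 1)%N; rewrite h /= -addn1 -addnA.
have [mf [f0 [f1 [_ [_ [_ [_ [_ [fM _]]]]]]]]] := hH r hr.
have M0' : 0 <= M by exact: ltW.
have pp0 : 0 <= p by exact: ltW.
have c2 : 1 <= 2 / Num.sqrt 3 :> R.
  by rewrite ler_pdivlMr ?sqrt3_gt0 // mul1r (@sqrt3_le2 R).
have Kb : forall (s : R) (m : nat), 0 < s -> p^+2 * (1 + m%:R * s^+2) <= 1 ->
    Kiter s m f x <= M * psi (p * x).
  move=> s m s0 hm.
  have [_ _ ib] := @Kiter_props R s M f s0 M0' mf f0 fM m.
  apply: le_trans (ib x) _; apply: ler_wpM2l => //.
  apply: psi_s_le => //; first exact: tau_ge1.
  by rewrite sqr_sqrtr // addr_ge0 // mulr_ge0 // sqr_ge0.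
split.
  move=> i s i0 s0 hs.
  have tb := @tau_bound R p s i p0 p1 i0 s0 hs.
  apply: le_trans (Kb s i s0 tb) _.
  rewrite -mulrA; apply: ler_wpM2l => //.
  by apply: ler_peMl; [exact: psi_ge0|exact: exprn_ege1].
move=> s s0 hs.
have tb : p^+2 * (1 + k%:R * s^+2) <= 1.
  move: hs; case: eqP => [-> _|/eqP k0 hs].
    by rewrite mul0r addr0 mulr1; nra.
  by apply: (@tau_bound R p s k p0 p1 _ s0 hs); rewrite lt0n.
have Kb' : forall m, (m <= k)%N -> Kiter s m f x <= M * psi (p * x).
  move=> m mk; apply: Kb => //; apply: le_trans tb.
  apply: ler_wpM2l; first exact: sqr_ge0.
  rewrite lerD2l; apply: ler_wpM2r; first exact: sqr_ge0.
  by rewrite ler_nat.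
have Kp : forall m, 0 <= Kiter s m f x.
  by move=> m; have [_ ip _] := @Kiter_props R s M f s0 M0' mf f0 fM m.
set Bd := M * psi (p * x).
have Bd0 : 0 <= Bd by rewrite mulr_ge0 // psi_ge0.
have [c [cz cE cS]] := @fseq_repr R s M f s0 M0' mf f0 fM k.
have fk : fseq s f k x <= (2 ^+ k.+1 - 1) * Bd.
  rewrite cE; apply: le_trans (_ : \sum_(m < k.+1) `|c m| * Bd <= _).
    apply: ler_sum => m _.
    apply: le_trans (_ : `|c m| * Kiter s m f x <= _).
      by apply: ler_wpM2r => //; exact: ler_norm.
    by apply: ler_wpM2l => //; apply: Kb'; rewrite -ltnS.
  by rewrite -mulr_suml; apply: ler_wpM2r.
have fb : f x <= Bd by exact: (Kb' 0%N).
set T := 2 * M * (4 / Num.sqrt 3) ^+ k * psi (p * x).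
have BT : 2 ^+ k.+1 * Bd <= T.
  rewrite /T /Bd exprS -!mulrA; apply: ler_wpM2l => //.
  rewrite mulrCA; apply: ler_wpM2l => //.
  apply: ler_wpM2r; first exact: psi_ge0.
  apply: lerXn2r; rewrite ?nnegrE //.
  by rewrite ler_pdivlMr ?sqrt3_gt0 //; have := @sqrt3_le2 R; lra.
have T0 : 0 <= T by apply: le_trans BT; rewrite mulr_ge0 // exprn_ge0.
have fkT : fseq s f k x <= T.
  apply: le_trans fk _; apply: le_trans BT; apply: ler_wpM2r => //; lra.
have fT : f x <= T.
  apply: le_trans fb _; apply: le_trans BT; apply: ler_peMl => //.
  by apply: exprn_ege1; rewrite ler1n.
have gE : forall y, gseq s f k y = if y \in Jset s f k then fseq s f k y else f y / 2.
  move=> y; rewrite /gseq !indicE in_setC.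
  case: (boolP (y \in Jset s f k)) => h /=.
    by rewrite mulr1 mulr0 addr0.
  by rewrite mulr0 mulr1 add0r.
have gT : gseq s f k x <= T.
  rewrite gE; case: ifP => _ //.
  by apply: le_trans fT; rewrite ler_pdivrMr // ler_peMr //; lra.
have gf : forall y, f y / 2 <= gseq s f k y.
  move=> y; rewrite gE; case: ifPn => // /set_mem h.
  exact: ltW.
have g0 : 0 <= gseq s f k x by apply: le_trans (gf x); rewrite divr_ge0.
have I := @int_ge_half R f (gseq s f k) mf f0 f1 gf.
have hT : hseq s f k x / 2 <= T.
  rewrite /hseq /Rintegral.
  case E : (\int[@leb R]_y (gseq s f k y)%:E)%E I => [r'| |] //= I.
  - rewrite lee_fin in I.
    apply: le_trans gT.
    have r0 : 0 < r' by apply: lt_le_trans I; rewrite invr_gt0.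
    rewrite ler_pdivrMr // ler_pdivrMr //.
    nra.
  - by rewrite invr0 mulr0 mul0r.
rewrite !ge_max fkT gT hT.
done.
Qed.
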